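(* On the subspace domain $\mathcal S(\mathcal H_V)$ with $(\alpha_s,\gamma_s)$, define for every subspace $Q$: $\llbracket\mathbf{skip}\rrbracket^\#(Q)=Q$; $\llbracket\bar q:=|0\rangle\rrbracket^\#(Q)=\{|0\rangle_{\bar q}\otimes|\psi\rangle:|\psi\rangle\in\lceil\mathrm{Tr}_{\bar q}(Q)\rceil\}$; $\llbracket\bar q\mathrel{*{=}}U\rrbracket^\#(Q)=\{U|\psi\rangle:|\psi\rangle\in Q\}$; $\llbracket\mathbf{assert}\ P[\bar q]\rrbracket^\#(Q)=\mathrm{span}\{P|\psi\rangle:|\psi\rangle\in Q\}$. Each of these is a complete abstraction of the corresponding $\llbracket e\rrbracket$. Moreover, for any program $S$, if $\llbracket S\rrbracket(\rho)=\sum_{k\in K}E_k\rho E_k^\dagger$ is a Kraus representation, then the operator $Q\mapsto\mathrm{span}\{E_k|\psi\rangle:k\in K,|\psi\rangle\in Q\}$ is a complete abstraction of $\llbracket S\rrbracket$, i.e. $\alpha_s(\llbracket S\rrbracket(R))=\mathrm{span}\{E_k|\psi\rangle:k\in K,|\psi\rangle\in\alpha_s(R)\}$ for all $R\subseteq\mathcal D(\mathcal H_V)$.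
   Context: Fix a finite set $V$ of quantum variables, each a qubit with state space $\mathcal H_q\cong\mathbb C^2$; for $W\subseteq V$, $\mathcal H_W=\bigotimes_{q\in W}\mathcal H_q$. Operators and subspaces on $\mathcal H_W$ are identified with their cylindrical extensions to $\mathcal H_V$, and a subspace is identified with its orthogonal projector (so $\mathrm{Tr}_{\bar q}(Q)$ is the partial trace over $\bar q$ of the projector onto $Q$); $P^\perp$ is the orthocomplement; $\lceil\rho\rceil$ is the support of $\rho$. $\mathcal D(\mathcal H_V)$ is the set of partial density operators (positive, trace $\le1$). Programs: $S::=\mathbf{skip}\mid \bar q:=|0\rangle\mid \bar q\mathrel{*{=}}U\mid \mathbf{assert}\ P[\bar q]\mid S_0;S_1\mid \mathbf{if}\ P[\bar q]\ \mathbf{then}\ S_1\ \mathbf{else}\ S_0\ \mathbf{end}\mid\mathbf{while}\ P[\bar q]\ \mathbf{do}\ S\ \mathbf{end}$, with $\bar q=q_1,\dots,q_t$ distinct variables, $U$ unitary on $\mathcal H_{\bar q}$, $P$ a subspace of $\mathcal H_{\bar q}$; the first four forms are the basic commands. Semantics: $\llbracket\mathbf{skip}\rrbracket(\rho)=\rho$; $\llbracket\bar q:=|0\rangle\rrbracket(\rho)=\sum_{i=0}^{2^t-1}|0\rangle_{\bar q}\langle i|\rho|i\rangle_{\bar q}\langle0|$; $\llbracket\bar q\mathrel{*{=}}U\rrbracket(\rho)=U\rho U^\dagger$; $\llbracket\mathbf{assert}\ P[\bar q]\rrbracket(\rho)=P\rho P$; $\llbracket S_0;S_1\rrbracket=\llbracket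 S_1\rrbracket\circ\llbracket S_0\rrbracket$; $\llbracket\mathbf{if}\ P[\bar q]\ \mathbf{then}\ S_1\ \mathbf{else}\ S_0\ \mathbf{end}\rrbracket(\rho)=\llbracket\mathbf{assert}\ P[\bar q];S_1\rrbracket(\rho)+\llbracket\mathbf{assert}\ P^\perp[\bar q];S_0\rrbracket(\rho)$; $\llbracket\mathbf{while}\ P[\bar q]\ \mathbf{do}\ S\ \mathbf{end}\rrbracket(\rho)=\sum_{i\ge0}\llbracket(\mathbf{assert}\ P[\bar q];S)^i;\mathbf{assert}\ P^\perp[\bar q]\rrbracket(\rho)$. Each $\llbracket S\rrbracket$ is a completely positive trace-nonincreasing map and so admits a finite Kraus representation. $\llbracket S\rrbracket(R)=\{\llbracket S\rrbracket(\rho):\rho\in R\}$ for $R\subseteq\mathcal D(\mathcal H_V)$. The subspace domain $\mathcal S(\mathcal H_V)$: all subspaces of $\mathcal H_V$, ordered by inclusion, join $P\vee Q=\mathrm{span}(P\cup Q)$; $\gamma_s(P)=\{\rho:\lceil\rho\rceil\subseteq P\}$, $\alpha_s(R)=\bigvee\{\lceil\rho\rceil:\rho\in R\}$. An operator $f^\#$ on $\mathcal S(\mathcal H_V)$ is a complete abstraction of $f$ if $\alpha_s\circ f=f^\#\circ\alpha_s$. *)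

(* Defs.v *)
From HB Require Import structures.
From mathcomp Require Import all_boot all_order all_algebra.
From mathcomp Require Import complex.
From mathcomp Require Import reals.
From Stdlib Require Import ClassicalEpsilon.
Set Implicit Arguments. Unset Strict Implicit. Unset Printing Implicit Defensive.
Import Order.TTheory GRing.Theory Num.Theory.
Local Open Scope ring_scope.

Section QDefs.
Variable R : realType.
Local Notation C := (R[i]).

Definition dag (m p : nat) (A : 'M[C]_(m, p)) : 'M[C]_(p, m) :=
  (map_mx Num.conj A)^T.

Definition vset (m : nat) := 'cV[C]_m -> Prop.

Definition is_subspace (m : nat) (X : vset m) : Prop :=
  X 0 /\ (forall u v, X u -> X v -> X (u + v)) /\ (forall (a : C) u, X u -> X (a *: u)).

Definition span (m : nat) (X : vset m) : vset m :=
  fun v => exists (k : nat) (w : 'I_k -> 'cV[C]_m) (c : 'I_k -> C),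
      (forall i, X (w i)) /\ v = \sum_(i < k) c i *: w i.

Definition supp (m : nat) (M : 'M[C]_m) : vset m :=
  fun v => exists w : 'cV[C]_m, v = M *m w.

Definition ortho (m : nat) (X : vset m) : vset m :=
  fun v => forall w, X w -> (dag w *m v) 0 0 = 0.

Definition is_proj_onto (m : nat) (M : 'M[C]_m) (X : vset m) : Prop :=
  dag M = M /\ M *m M = M /\ (forall v, supp M v <-> X v).
Definition projmx (m : nat) (X : vset m) : 'M[C]_m :=
  epsilon (inhabits 0) (fun M => is_proj_onto M X).

Definition unitary (m : nat) (U : 'M[C]_m) : Prop :=
  dag U *m U = 1%:M /\ U *m dag U = 1%:M.

Definition pdo (m : nat) (rho : 'M[C]_m) : Prop :=
  (forall v : 'cV[C]_m, 0 <= (dag v *m rho *m v) 0 0) /\ \tr rho <= 1.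

Definition cvgC (u : nat -> C) (l : C) : Prop :=
  forall e : C, 0 < e -> exists N, forall k, (N <= k)%N -> `|u k - l| < e.
Definition limmx (m : nat) (u : nat -> 'M[C]_m) : 'M[C]_m :=
  epsilon (inhabits (0 : 'M[C]_m)) (fun l : 'M[C]_m => forall i j, cvgC (fun k => u k i j) (l i j)).

(* V = 'I_n; computational basis states of H_V are assignments V -> bool *)
Definition bst (n : nat) := {ffun 'I_n -> bool}.
Definition qdim (n : nat) := #|{: bst n}|.
Definition idx (n : nat) (x : bst n) : 'I_(qdim n) := enum_rank x.
Definition st (n : nat) (i : 'I_(qdim n)) : bst n := enum_val i.

Definition cvar (n t : nat) (qs : t.-tuple 'I_n) := {v : 'I_n | v \notin qs}.
Definition cbst (n t : nat) (qs : t.-tuple 'I_n) := {ffun cvar qs -> bool}.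
Definition cdim (n t : nat) (qs : t.-tuple 'I_n) := #|{: cbst qs}|.

Definition res (n t : nat) (qs : t.-tuple 'I_n) (x : bst n) : bst t :=
  [ffun j => x (tnth qs j)].
Definition resc (n t : nat) (qs : t.-tuple 'I_n) (x : bst n) : cbst qs :=
  [ffun v => x (val v)].

(* cylindrical extension A (x) I_{V \ qs} of an operator on H_qs *)
Definition ext (n t : nat) (qs : t.-tuple 'I_n) (A : 'M[C]_(qdim t)) : 'M[C]_(qdim n) :=
  \matrix_(i, j)
    if resc qs (st i) == resc qs (st j)
    then A (idx (res qs (st i))) (idx (res qs (st j))) else 0.

Definition ptrace (n t : nat) (qs : t.-tuple 'I_n) (A : 'M[C]_(qdim n))
  : 'M[C]_(cdim qs) :=
  \matrix_(c, c')
    \sum_(x : bst n | resc qs x == enum_val c)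
      \sum_(y : bst n | (resc qs y == enum_val c') && (res qs y == res qs x))
        A (idx x) (idx y).

(* |0>_qs (x) |psi>_{V \ qs} *)
Definition tens0 (n t : nat) (qs : t.-tuple 'I_n) (psi : 'cV[C]_(cdim qs))
  : 'cV[C]_(qdim n) :=
  \col_i (if res qs (st i) == [ffun _ => false]
          then psi (enum_rank (resc qs (st i))) 0 else 0).

Arguments tens0 {n t} qs psi.

Definition zero_idx (t : nat) : 'I_(qdim t) := @idx t [ffun _ => false].

Inductive prog (n : nat) : Type :=
| Skip
| Init (t : nat) (qs : t.-tuple 'I_n)
| Unit (t : nat) (qs : t.-tuple 'I_n) (U : 'M[C]_(qdim t))
| Assert (t : nat) (qs : t.-tuple 'I_n) (P : vset (qdim t))
| Seq (S0 S1 : prog n)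
| If (t : nat) (qs : t.-tuple 'I_n) (P : vset (qdim t)) (S1 S0 : prog n)
| While (t : nat) (qs : t.-tuple 'I_n) (P : vset (qdim t)) (S : prog n).

Fixpoint wf (n : nat) (S : prog n) : Prop :=
  match S with
  | Skip => True
  | Init _ qs => uniq qs
  | Unit _ qs U => uniq qs /\ unitary U
  | Assert _ qs P => uniq qs /\ is_subspace P
  | Seq S0 S1 => wf S0 /\ wf S1
  | If _ qs P S1 S0 => uniq qs /\ is_subspace P /\ wf S1 /\ wf S0
  | While _ qs P B => uniq qs /\ is_subspace P /\ wf B
  end.

Definition sem_init (n t : nat) (qs : t.-tuple 'I_n) (rho : 'M[C]_(qdim n)) :=
  \sum_(i < qdim t) ext qs (delta_mx (zero_idx t) i) *m rho
                     *m ext qs (delta_mx i (zero_idx t)).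
Definition sem_unit (n t : nat) (qs : t.-tuple 'I_n) (U : 'M[C]_(qdim t)) rho :=
  ext qs U *m rho *m dag (ext qs U).
Definition sem_assert (n t : nat) (qs : t.-tuple 'I_n) (P : vset (qdim t)) rho :=
  ext qs (projmx P) *m rho *m ext qs (projmx P).

Fixpoint sem (n : nat) (S : prog n) : 'M[C]_(qdim n) -> 'M[C]_(qdim n) :=
  match S with
  | Skip => fun rho => rho
  | Init _ qs => sem_init qs
  | Unit _ qs U => sem_unit qs U
  | Assert _ qs P => sem_assert qs P
  | Seq S0 S1 => fun rho => sem S1 (sem S0 rho)
  | If _ qs P S1 S0 => fun rho =>
      sem S1 (sem_assert qs P rho) + sem S0 (sem_assert qs (ortho P) rho)
  | While _ qs P B => fun rho =>
      limmx (fun N => \sum_(i < N)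
        sem_assert qs (ortho P) (iter i (fun r => sem B (sem_assert qs P r)) rho))
  end.

Definition alpha_s (n : nat) (Rs : 'M[C]_(qdim n) -> Prop) : vset (qdim n) :=
  span (fun v => exists rho, Rs rho /\ supp rho v).

Definition gamma_s (n : nat) (P : vset (qdim n)) : 'M[C]_(qdim n) -> Prop :=
  fun rho => pdo rho /\ (forall v, supp rho v -> P v).

Definition liftset (n : nat) (f : 'M[C]_(qdim n) -> 'M[C]_(qdim n))
  (Rs : 'M[C]_(qdim n) -> Prop) : 'M[C]_(qdim n) -> Prop :=
  fun sigma => exists rho, Rs rho /\ sigma = f rho.

Definition complete_abstraction (n : nat) (f : 'M[C]_(qdim n) -> 'M[C]_(qdim n))
  (fs : vset (qdim n) -> vset (qdim n)) : Prop :=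
  forall Rs : 'M[C]_(qdim n) -> Prop, (forall rho, Rs rho -> pdo rho) ->
    alpha_s (liftset f Rs) = fs (alpha_s Rs).

Definition abs_skip (n : nat) (Q : vset (qdim n)) : vset (qdim n) := Q.
Definition abs_init (n t : nat) (qs : t.-tuple 'I_n) (Q : vset (qdim n)) : vset (qdim n) :=
  fun v => exists psi, supp (ptrace qs (projmx Q)) psi /\ v = tens0 qs psi.
Definition abs_unit (n t : nat) (qs : t.-tuple 'I_n) (U : 'M[C]_(qdim t))
  (Q : vset (qdim n)) : vset (qdim n) :=
  fun v => exists psi, Q psi /\ v = ext qs U *m psi.
Definition abs_assert (n t : nat) (qs : t.-tuple 'I_n) (P : vset (qdim t))
  (Q : vset (qdim n)) : vset (qdim n) :=
  span (fun v => exists psi, Q psi /\ v = ext qs (projmx P) *m psi).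
Definition abs_kraus (n : nat) (K : finType) (E : K -> 'M[C]_(qdim n))
  (Q : vset (qdim n)) : vset (qdim n) :=
  span (fun v => exists k psi, Q psi /\ v = E k *m psi).

End QDefs.

(* Main.v *)
Require Import Defs.
From HB Require Import structures.
From mathcomp Require Import all_boot all_order all_algebra.
From mathcomp Require Import complex reals.
From Stdlib Require Import ClassicalEpsilon Classical FunctionalExtensionality PropExtensionality.
From mathcomp Require Import ring zify.
Set Implicit Arguments. Unset Strict Implicit. Unset Printing Implicit Defensive.
Import Order.TTheory GRing.Theory Num.Theory.
Local Open Scope ring_scope.

Section Lin.
Variable R : realType.
Local Notation C := (R[i]).

Lemma dagE m p (A : 'M[C]_(m, p)) i j : dag A i j = (A j i)^*.
Proof. by rewrite /dag !mxE. Qed.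

Lemma dagK m p (A : 'M[C]_(m, p)) : dag (dag A) = A.
Proof. by apply/matrixP=> i j; rewrite !dagE conjCK. Qed.

Lemma dagD m p (A B : 'M[C]_(m, p)) : dag (A + B) = dag A + dag B.
Proof. by apply/matrixP=> i j; rewrite !dagE !mxE rmorphD. Qed.

Lemma dagZ m p (a : C) (A : 'M[C]_(m, p)) : dag (a *: A) = a^* *: dag A.
Proof. by apply/matrixP=> i j; rewrite !dagE !mxE rmorphM. Qed.

Lemma dag0 m p : dag (0 : 'M[C]_(m, p)) = 0.
Proof. by apply/matrixP=> i j; rewrite dagE !mxE rmorph0. Qed.

Lemma dagM m p q (A : 'M[C]_(m, p)) (B : 'M[C]_(p, q)) :
  dag (A *m B) = dag B *m dag A.
Proof.
apply/matrixP=> i j; rewrite dagE !mxE rmorph_sum; apply: eq_bigr=> k _.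
by rewrite !dagE rmorphM mulrC.
Qed.

Lemma dag1 m : dag (1%:M : 'M[C]_m) = 1%:M.
Proof.
apply/matrixP=> i j; rewrite dagE !mxE eq_sym.
by rewrite rmorph_nat.
Qed.

Lemma dag_sum m p (I : finType) (F : I -> 'M[C]_(m, p)) :
  dag (\sum_i F i) = \sum_i dag (F i).
Proof.
apply/matrixP=> i j; rewrite dagE !summxE rmorph_sum; apply: eq_bigr=> k _.
by rewrite dagE.
Qed.

Lemma span_gen m (X : vset R m) v : X v -> Defs.span X v.
Proof.
move=> Xv; exists 1%N, (fun _ => v), (fun _ => 1); split => //.
by rewrite big_ord1 scale1r.
Qed.

Lemma span_sub0 m (X : vset R m) : Defs.span X 0.
Proof. by exists 0%N, (fun _ => 0), (fun _ => 0); split; [by case | by rewrite big_ord0]. Qed.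

Lemma span_subspace m (X : vset R m) : is_subspace (Defs.span X).
Proof.
split; first exact: span_sub0.
split.
  move=> u v [k1 [w1 [c1 [H1 ->]]]] [k2 [w2 [c2 [H2 ->]]]].
  exists (k1 + k2)%N, (fun i => match split i with inl a => w1 a | inr b => w2 b end),
    (fun i => match split i with inl a => c1 a | inr b => c2 b end).
  split.
    by move=> i; case: (split i).
  rewrite big_split_ord /=; congr (_ + _); apply: eq_bigr => i _.
    by rewrite (unsplitK (inl i)).
  by rewrite (unsplitK (inr i)).
move=> a u [k [w [c [H ->]]]]; exists k, w, (fun i => a * c i); split => //.
by rewrite scaler_sumr; apply: eq_bigr => i _; rewrite scalerA.
Qed.

Lemma subspace_sum m (Y : vset R m) (I : finType) (F : I -> 'cV[C]_m) :
  is_subspace Y -> (forall i, Y (F i)) -> Y (\sum_i F i).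
Proof.
move=> [Y0 [YD YZ]] HF; apply: (big_ind Y) => //.
Qed.

Lemma span_min m (X Y : vset R m) : is_subspace Y -> (forall w, X w -> Y w) ->
  forall v, Defs.span X v -> Y v.
Proof.
move=> HY HXY v [k [w [c [H ->]]]].
apply: subspace_sum => // i; case: HY => _ [_ HZ]; apply: HZ; exact: HXY.
Qed.

Lemma span_mono m (X Y : vset R m) : (forall w, X w -> Defs.span Y w) ->
  forall v, Defs.span X v -> Defs.span Y v.
Proof. move=> H; apply: span_min => //; exact: span_subspace. Qed.

Lemma span_id m (Y : vset R m) : is_subspace Y -> forall v, Defs.span Y v <-> Y v.
Proof. move=> HY v; split; [exact: span_min | exact: span_gen]. Qed.

Lemma supp_subspace m (M : 'M[C]_m) : is_subspace (supp M).
Proof.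
split; first by exists 0; rewrite mulmx0.
split.
  by move=> u v [a ->] [b ->]; exists (a + b); rewrite mulmxDr.
by move=> a u [w ->]; exists (a *: w); rewrite scalemxAr.
Qed.


Definition psd m (rho : 'M[C]_m) := forall v : 'cV[C]_m, 0 <= (dag v *m rho *m v) 0 0.
Definition qf m (A : 'M[C]_m) (x y : 'cV[C]_m) := (dag x *m A *m y) 0 0.

Lemma qf_exp m (A : 'M[C]_m) x y (t : C) :
  qf A (x + t *: y) (x + t *: y) =
  qf A x x + t * qf A x y + t^* * qf A y x + t^* * t * qf A y y.
Proof.
rewrite /qf dagD dagZ !mulmxDl !mulmxDr -!scalemxAl -!scalemxAr !mxE.
ring.
Qed.

Lemma dag_delta m p (i : 'I_m) (j : 'I_p) : dag (delta_mx i j : 'M[C]_(m,p)) = delta_mx j i.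
Proof.
apply/matrixP=> a b; rewrite dagE !mxE rmorph_nat.
by rewrite andbC.
Qed.

Lemma qf_delta m (A : 'M[C]_m) i j : qf A (delta_mx i 0) (delta_mx j 0) = A i j.
Proof. by rewrite /qf dag_delta -rowE -colE !mxE. Qed.

Lemma normsq_ge0 m (w : 'cV[C]_m) : 0 <= (dag w *m w) 0 0.
Proof.
rewrite mxE; apply: sumr_ge0 => i _; rewrite dagE mulrC; exact: mul_conjC_ge0.
Qed.

Lemma normsq_eq0 m (w : 'cV[C]_m) : (dag w *m w) 0 0 = 0 -> w = 0.
Proof.
rewrite mxE => H; apply/matrixP => i j; rewrite (ord1 j) mxE.
have := psumr_eq0P (P := xpredT) _ H => /(_ _ i isT).
  rewrite dagE mulrC => /(_ _)/eqP; rewrite mul_conjC_eq0 => X.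
  by apply/eqP; apply: X => k _; rewrite dagE mulrC; exact: mul_conjC_ge0.
Qed.

Lemma qf_conj m (A : 'M[C]_m) x y : (qf A x y)^* = qf (dag A) y x.
Proof.
have := dagE (dag x *m A *m y) 0 0.
by rewrite !dagM dagK mulmxA => <-.
Qed.

Lemma qf_sub m (A B : 'M[C]_m) x y : qf (A - B) x y = qf A x y - qf B x y.
Proof. by rewrite /qf mulmxBr mulmxBl !mxE. Qed.

Lemma psd_herm m (rho : 'M[C]_m) : psd rho -> dag rho = rho.
Proof.
move=> Hp.
pose H := rho - dag rho.
have qH : forall v, qf H v v = 0.
  move=> v; rewrite /H qf_sub -qf_conj.
  by rewrite /qf (geC0_conj (Hp v)) subrr.
have B0 : forall x y, qf H x y = 0.
  move=> x y.
  have h1 := qf_exp H x y 1; have h2 := qf_exp H x y 'i.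
  rewrite !qH rmorph1 in h1 h2; rewrite conjCi in h2.
  have e1 : qf H x y + qf H y x = 0 by rewrite [RHS]h1; ring.
  have e2 : 'i * qf H x y - 'i * qf H y x = 0 by rewrite [RHS]h2; ring.
  have : 'i * (2 * qf H x y) = 'i * (qf H x y + qf H y x) + ('i * qf H x y - 'i * qf H y x) by ring.
  rewrite e1 e2 mulr0 addr0.
  move/eqP; rewrite mulf_eq0 (negbTE (neq0Ci _)) /= mulf_eq0 pnatr_eq0 /=.
  by move/eqP.
apply/esym/eqP; rewrite -subr_eq0; apply/eqP/matrixP => i j.
by rewrite -(qf_delta H) B0 mxE.
Qed.

Lemma psd_ker m (rho : 'M[C]_m) y : psd rho -> qf rho y y = 0 -> rho *m y = 0.
Proof.
move=> Hp Hy; have Hh := psd_herm Hp.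
set w := rho *m y.
set N := (dag w *m w) 0 0; set c := qf rho w w.
have N0 : 0 <= N := normsq_ge0 w.
have c0 : 0 <= c := Hp w.
have Exy : qf rho y w = N by rewrite /qf /N /w dagM Hh.
have Eyx : qf rho w y = N by rewrite /qf /N /w -mulmxA.
have cp : 0 < c + 1 by apply: (lt_le_trans ltr01); rewrite lerDr.
have c2p : 0 < c + 2 by apply: (lt_le_trans (ltr0n _ 2)); rewrite lerDr.
have c1 : c + 1 != 0 by rewrite gt_eqF.
set s := N / (c + 1).
have sC : (- s)^* = - s.
  by apply: conj_Creal; rewrite rpredN; apply: ger0_real; apply: divr_ge0 => //; apply: ltW.
have := Hp (y + (- s) *: w).
rewrite -/(qf rho _ _) qf_exp Hy Exy Eyx -/c sC.
have -> : 0 + - s * N + - s * N + - s * - s * c = - (N ^+ 2 * (c + 2) / (c + 1) ^+ 2).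
  by rewrite /s; field.
rewrite oppr_ge0 => Hle.
have Hge : 0 <= N ^+ 2 * (c + 2) / (c + 1) ^+ 2.
  by apply: divr_ge0; [apply: mulr_ge0; [apply: exprn_ge0 | apply: ltW] | apply: exprn_ge0; apply: ltW].
have /eqP : N ^+ 2 * (c + 2) / (c + 1) ^+ 2 = 0 by apply: le_anti; rewrite Hle Hge.
rewrite !mulf_eq0 invr_eq0 !expf_eq0 /= (negbTE c1) (gt_eqF c2p) !orbF orbb => /eqP/eqP HN.
apply: normsq_eq0; exact/eqP.
Qed.

Lemma col_mul p a b (A : 'M[C]_(p,a)) (B : 'M[C]_(a,b)) j : col j (A *m B) = A *m col j B.
Proof. by rewrite !colE mulmxA. Qed.

Lemma colspace_sub p a b (M : 'M[C]_(p,a)) (X : 'M[C]_(p,b)) :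
  (forall u : 'rV[C]_p, u *m M = 0 -> u *m X = 0) -> exists D : 'M[C]_(a,b), X = M *m D.
Proof.
move=> H.
have : (X^T <= M^T)%MS.
  rewrite submxE; apply/eqP/matrixP => i j.
  set c := col j (cokermx M^T).
  have Mc : M^T *m c = 0 by rewrite /c -col_mul mulmx_coker; apply/matrixP=> ? ?; rewrite !mxE.
  have Hc : c^T *m X = 0.
    apply: H; have : (M^T *m c)^T = 0 by rewrite Mc trmx0.
    by rewrite trmx_mul trmxK.
  have : X^T *m c = 0.
    have : (c^T *m X)^T = 0 by rewrite Hc trmx0.
    by rewrite trmx_mul trmxK.
  move=> H0.
  have -> : (X^T *m cokermx M^T) i j = (X^T *m c) i 0 by rewrite /c -col_mul [RHS]mxE.
  by rewrite H0 !mxE.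
move/submxP => [D HD]; exists D^T.
by rewrite -[X]trmxK HD trmx_mul trmxK.
Qed.

Lemma kraus_supp p m (K : finType) (E : K -> 'M[C]_(p, m)) (rho : 'M[C]_m) : psd rho ->
  forall v, supp (\sum_k E k *m rho *m dag (E k)) v <->
    Defs.span (fun v => exists k w, supp rho w /\ v = E k *m w) v.
Proof.
move=> Hp v; split.
  move=> [z ->]; rewrite mulmx_suml.
  apply: subspace_sum; first exact: span_subspace.
  move=> k; apply: span_gen; exists k, (rho *m (dag (E k) *m z)); split.
    by exists (dag (E k) *m z).
  by rewrite !mulmxA.
apply: span_min; first exact: supp_subspace.
move=> _ [k [w [[z ->] ->]]].
set M := \sum_k E k *m rho *m dag (E k).
suff [D HD] : exists D, E k *m rho = M *m D.
  by exists (D *m z); rewrite mulmxA HD mulmxA.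
apply: colspace_sub => u Hu.
have Hh := psd_herm Hp.
have : \sum_l qf rho (dag (u *m E l)) (dag (u *m E l)) = 0.
  have : (u *m M *m dag u) 0 0 = 0 by rewrite Hu mul0mx mxE.
  move=> H0; rewrite -[RHS]H0 /M mulmx_sumr mulmx_suml summxE.
  by apply: eq_bigr => l _; rewrite /qf (dagK (u *m E l)) dagM !mulmxA.
move/psumr_eq0P => /(_ (fun l _ => Hp _)) /(_ k isT) /(psd_ker Hp) Hk.
have := congr1 (@dag R _ _) Hk; rewrite dagM (dagK (u *m E k)) Hh dag0.
by rewrite mulmxA.
Qed.

Lemma preim_subspace p m (A : 'M[C]_(p, m)) (Y : vset R p) :
  is_subspace Y -> is_subspace (fun v => Y (A *m v)).
Proof.
move=> [Y0 [YD YZ]]; split; first by rewrite mulmx0.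
split; first by move=> u v Hu Hv; rewrite mulmxDr; apply: YD.
by move=> a u Hu; rewrite -scalemxAr; apply: YZ.
Qed.

Lemma vset_ext m (X Y : vset R m) : (forall v, X v <-> Y v) -> X = Y.
Proof.
move=> H; apply: functional_extensionality => v; apply: propositional_extensionality; exact: H.
Qed.

Lemma kraus_ca n (f : 'M[C]_(qdim n) -> 'M[C]_(qdim n)) (K : finType) (E : K -> 'M[C]_(qdim n)) :
  (forall rho, pdo rho -> f rho = \sum_k E k *m rho *m dag (E k)) ->
  complete_abstraction f (abs_kraus E).
Proof.
move=> Hf Rs HR; apply: vset_ext => v; rewrite /alpha_s /abs_kraus; split.
  apply: span_mono => w [s [[rho [Rr ->]] Hw]].
  rewrite (Hf _ (HR _ Rr)) in Hw.
  move: Hw => /(kraus_supp E (HR _ Rr).1); apply: span_mono => _ [k [w' [Hw' ->]]].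
  apply: span_gen; exists k, w'; split => //.
  by apply: span_gen; exists rho.
apply: span_mono => _ [k [psi [Hpsi ->]]].
move: psi Hpsi; apply: span_min.
  by apply: preim_subspace; exact: span_subspace.
move=> w [rho [Rr Hw]].
apply: span_gen; exists (f rho); split; first by exists rho.
rewrite (Hf _ (HR _ Rr)); apply/(kraus_supp E (HR _ Rr).1).
by apply: span_gen; exists k, w.
Qed.

Lemma subspace_basis m (P : vset R m) : is_subspace P ->
  exists r (B : 'M[C]_(r, m)), forall v, P v <-> (v^T <= B)%MS.
Proof.
move=> HP; have [P0 [PD PZ]] := HP.
suff H : forall k r (B : 'M[C]_(r, m)), (m - \rank B <= k)%N ->
    (forall u : 'rV[C]_m, (u <= B)%MS -> P u^T) ->
    exists r (B : 'M[C]_(r, m)), forall v, P v <-> (v^T <= B)%MS.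
  apply: (H m m 0); first by rewrite leq_subr.
  by move=> u; rewrite submx0 => /eqP ->; rewrite trmx0.
elim=> [|k IH] r B Hk Hinv.
  all: case: (classic (exists v, P v /\ ~~ (v^T <= B)%MS)) => [[v [Pv nv]]|Hno].
  - have : (B < col_mx B v^T)%MS.
      rewrite ltmxE col_mx_sub submx_refl (negbTE nv) andbF /= andbT.
      by rewrite -addsmxE addsmxSl.
    move/rank_ltmx; have := rank_leq_col (col_mx B v^T); lia.
  - exists r, B => v; split; last by move/Hinv; rewrite trmxK.
    move=> Pv; apply: NNPP => nv; apply: Hno; exists v; split => //; exact/negP.
  - have Hlt : (B < col_mx B v^T)%MS.
      rewrite ltmxE col_mx_sub submx_refl (negbTE nv) andbF /= andbT.
      by rewrite -addsmxE addsmxSl.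
    apply: (IH _ (col_mx B v^T)).
      move/rank_ltmx: Hlt; have := rank_leq_col (col_mx B v^T); lia.
    move=> u; rewrite -addsmxE => /sub_addsmxP [[u1 u2] /= ->].
    have /sub_rVP [a ->] : (u2 *m v^T <= v^T)%MS by apply: submxMl.
    rewrite linearD /= linearZ /= trmxK; apply: PD; last exact: PZ.
    by apply: Hinv; apply: submxMl.
  - exists r, B => v; split; last by move/Hinv; rewrite trmxK.
    move=> Pv; apply: NNPP => nv; apply: Hno; exists v; split => //; exact/negP.
Qed.

Lemma dag_tr_conj r m (S : 'M[C]_(r, m)) : (dag (S^T))^T = (S ^t* )%sesqui.
Proof. by apply/matrixP => i j; rewrite !mxE. Qed.

Lemma proj_exists m (P : vset R m) : is_subspace P -> is_proj_onto (projmx P) P.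
Proof.
move=> HP; rewrite /projmx; apply: (epsilon_spec _ (fun M : 'M[C]_m => is_proj_onto M P)).
have [r [B HB]] := subspace_basis HP.
set S := schmidt (row_base B).
have HS : S *m (S ^t* )%sesqui = 1%:M.
  by apply/unitarymxP; apply: schmidt_unitarymx; exact: rank_leq_col.
have ES : (S :=: B)%MS.
  by apply: eqmx_trans (eq_row_base B); apply: eqmx_schmidt_free; exact: row_base_free.
set W := S^T.
have HW : dag W *m W = 1%:M.
  have : (S *m (S ^t* )%sesqui)^T = 1%:M by rewrite HS trmx1.
  by rewrite -dag_tr_conj trmx_mul trmxK.
exists (W *m dag W); split; first by rewrite dagM dagK.
split; first by rewrite mulmxA -(mulmxA W) HW mulmx1.
move=> v; split.
  move=> [w ->]; apply/HB; rewrite -ES -mulmxA trmx_mul trmxK.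
  exact: submxMl.
move/HB; rewrite -ES => /submxP [x Hx].
exists (W *m x^T).
have -> : v = W *m x^T by rewrite /W -trmx_mul -Hx trmxK.
by rewrite -mulmxA (mulmxA (dag W)) HW mul1mx.
Qed.

Lemma dag_ext n t (qs : t.-tuple 'I_n) (A : 'M[C]_(qdim t)) : dag (ext qs A) = ext qs (dag A).
Proof.
apply/matrixP => i j; rewrite dagE !mxE eq_sym.
by case: ifP => _; rewrite ?dagE ?rmorph0.
Qed.

Lemma img_subspace p m (A : 'M[C]_(p, m)) (Q : vset R m) :
  is_subspace Q -> is_subspace (fun v => exists psi, Q psi /\ v = A *m psi).
Proof.
move=> [Q0 [QD QZ]]; split; first by exists 0; rewrite mulmx0.
split.
  by move=> _ _ [a [Ha ->]] [b [Hb ->]]; exists (a + b); rewrite mulmxDr; split => //; apply: QD.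
by move=> c _ [a [Ha ->]]; exists (c *: a); rewrite scalemxAr; split => //; apply: QZ.
Qed.

Lemma kraus1_img n (A : 'M[C]_(qdim n)) (Q : vset R (qdim n)) : is_subspace Q ->
  abs_kraus (fun _ : 'I_1 => A) Q = (fun v => exists psi, Q psi /\ v = A *m psi).
Proof.
move=> HQ; apply: vset_ext => v; rewrite /abs_kraus; split.
  apply: (span_min (img_subspace A HQ)).
  by move=> _ [k [psi [H ->]]]; exists psi.
by move=> [psi [H ->]]; apply: span_gen; exists ord0, psi.
Qed.

Lemma kraus1_span n (A : 'M[C]_(qdim n)) (Q : vset R (qdim n)) :
  abs_kraus (fun _ : 'I_1 => A) Q = Defs.span (fun v => exists psi, Q psi /\ v = A *m psi).
Proof.
apply: vset_ext => v; rewrite /abs_kraus; split; apply: span_mono.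
  by move=> _ [k [psi [H ->]]]; apply: span_gen; exists psi.
by move=> _ [psi [H ->]]; apply: span_gen; exists ord0, psi.
Qed.

Lemma alpha_subspace n (Rs : 'M[C]_(qdim n) -> Prop) : is_subspace (alpha_s Rs).
Proof. exact: span_subspace. Qed.

Lemma ca_skip n : complete_abstraction (sem (Skip R n)) (@abs_skip R n).
Proof.
move=> Rs HR; apply: vset_ext => v; rewrite /alpha_s /abs_skip /=; split; apply: span_mono.
  by move=> w [s [[rho [Hr ->]] Hw]]; apply: span_gen; exists rho.
by move=> w [rho [Hr Hw]]; apply: span_gen; exists rho; split => //; exists rho.
Qed.

Lemma ca_unit n t (qs : t.-tuple 'I_n) (U : 'M[C]_(qdim t)) :
  complete_abstraction (sem (Unit qs U)) (abs_unit qs U).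
Proof.
move=> Rs HR.
have CA := @kraus_ca n (sem (Unit qs U)) _ (fun _ : 'I_1 => ext qs U).
rewrite CA //; last by move=> rho _; rewrite big_ord1.
by rewrite kraus1_img //; exact: alpha_subspace.
Qed.

Lemma ca_assert n t (qs : t.-tuple 'I_n) (P : vset R (qdim t)) :
  is_subspace P -> complete_abstraction (sem (Assert qs P)) (abs_assert qs P).
Proof.
move=> HP Rs HR.
have CA := @kraus_ca n (sem (Assert qs P)) _ (fun _ : 'I_1 => ext qs (projmx P)).
rewrite CA //; last first.
  move=> rho _; rewrite big_ord1 /= /sem_assert dag_ext.
  by have [-> _] := proj_exists HP.
by rewrite kraus1_span.
Qed.

Section Join.
Variables (n t : nat) (qs : t.-tuple 'I_n).
Hypothesis Hu : uniq qs.

Definition join (a : bst t) (c : cbst qs) : bst n :=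
  [ffun v => if (insub v : option (cvar qs)) is Some w then c w
             else nth false (fgraph a) (index v qs)].

Lemma res_join a c : res qs (join a c) = a.
Proof.
apply/ffunP => j; rewrite !ffunE insubF ?mem_tnth //.
rewrite (tnth_nth (tnth qs j)) index_uniq ?size_tuple //.
exact: nth_fgraph_ord.
Qed.

Lemma resc_join a c : resc qs (join a c) = c.
Proof. by apply/ffunP => w; rewrite !ffunE valK. Qed.

Lemma join_res x : join (res qs x) (resc qs x) = x.
Proof.
apply/ffunP => v; rewrite !ffunE; case: insubP => [w _ <-|]; first by rewrite ffunE.
rewrite negbK => vq.
have hi : (index v qs < t)%N by rewrite -{2}(size_tuple qs) index_mem.
have := nth_fgraph_ord false (Ordinal hi) (res qs x); rewrite /= => ->.
by rewrite ffunE (tnth_nth v) /= nth_index.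
Qed.

Lemma join_eq x a c : (x == join a c) = (res qs x == a) && (resc qs x == c).
Proof.
apply/eqP/andP => [->|[/eqP <- /eqP <-]]; last by rewrite join_res.
by rewrite res_join resc_join.
Qed.

Lemma sum_resc (F : bst n -> C) c :
  \sum_(x | resc qs x == c) F x = \sum_a F (join a c).
Proof.
rewrite (reindex_onto (fun a => join a c) (res qs)); last first.
  by move=> x /eqP <-; rewrite join_res.
by apply: eq_bigl => a; rewrite resc_join res_join !eqxx.
Qed.

Lemma sum_uniq (F : bst n -> C) a c :
  \sum_(y | (resc qs y == c) && (res qs y == a)) F y = F (join a c).
Proof. by apply: big_pred1 => y; rewrite /= join_eq andbC. Qed.

Lemma idx_eq m (u : bst m) i : (idx u == i) = (u == st i).
Proof. by apply/eqP/eqP => [<-|->]; rewrite /idx /st ?enum_rankK ?enum_valK. Qed.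

Lemma er_eq m (u : bst m) (i : 'I_(qdim m)) : (enum_rank u == i) = (u == enum_val i).
Proof. by apply/eqP/eqP => [<-|->]; rewrite ?enum_rankK ?enum_valK. Qed.

Lemma re_eq m (u : bst m) (i : 'I_(qdim m)) : (i == enum_rank u) = (enum_val i == u).
Proof. by rewrite eq_sym er_eq eq_sym. Qed.

Definition slice (a : bst t) (phi : 'cV[C]_(qdim n)) : 'cV[C]_(cdim qs) :=
  \col_c phi (idx (join a (enum_val c))) 0.

Lemma init_kraus (i : 'I_(qdim t)) (phi : 'cV[C]_(qdim n)) :
  ext qs (delta_mx (zero_idx t) i) *m phi = @tens0 R n t qs (slice (st i) phi).
Proof.
apply/matrixP => x z; rewrite (ord1 z) !mxE.
case: ifP => Hx.
  rewrite enum_rankK.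
  rewrite (eq_bigr (fun y => if y == idx (join (st i) (resc qs (st x))) then phi y 0 else 0)).
    by rewrite -big_mkcond big_pred1_eq.
  move=> y _; rewrite !mxE /idx /st /zero_idx !er_eq re_eq !enum_rankK join_eq.
  rewrite /st in Hx; rewrite Hx /= [resc _ (enum_val x) == _]eq_sym.
  by case: (resc qs (enum_val y) == _); case: (res qs (enum_val y) == _); rewrite /= ?mul1r ?mul0r.
rewrite big1 // => y _; rewrite !mxE /idx /st /zero_idx !er_eq !enum_rankK.
rewrite /st in Hx; rewrite Hx /=.
by case: ifP; rewrite /= ?mul0r.
Qed.

Definition fk (P : 'M[C]_(qdim n)) (k : bst t * 'I_(qdim n)) : 'cV[C]_(cdim qs) :=
  slice k.1 (col k.2 P).

Lemma ptrace_kraus (P : 'M[C]_(qdim n)) : P *m dag P = P ->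
  ptrace qs P = \sum_k fk P k *m 1%:M *m dag (fk P k).
Proof.
move=> HP; apply/matrixP => c c'; rewrite summxE mxE.
transitivity (\sum_a \sum_j P (idx (join a (enum_val c))) j * (P (idx (join a (enum_val c'))) j)^*).
  rewrite (eq_bigr (fun x => P (idx x) (idx (join (res qs x) (enum_val c'))))); last first.
    by move=> x _; rewrite sum_uniq.
  rewrite sum_resc; apply: eq_bigr => a _; rewrite res_join -{1}HP mxE.
  by apply: eq_bigr => j _; rewrite dagE.
rewrite pair_bigA; apply: eq_bigr => -[a j] _.
by rewrite mulmx1 mxE big_ord1 dagE /fk /slice !mxE.
Qed.

Lemma tens0D (u v : 'cV[C]_(cdim qs)) : @tens0 R n t qs (u + v) = tens0 u + tens0 v.
Proof. by apply/matrixP => i j; rewrite !mxE; case: ifP; rewrite ?addr0 ?mxE. Qed.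

Lemma tens0Z a (u : 'cV[C]_(cdim qs)) : @tens0 R n t qs (a *: u) = a *: tens0 u.
Proof. by apply/matrixP => i j; rewrite !mxE; case: ifP; rewrite ?mulr0 ?mxE. Qed.

Lemma tens00 : @tens0 R n t qs 0 = 0.
Proof. by apply/matrixP => i j; rewrite !mxE; case: ifP. Qed.

Lemma img_tens0 (Q : vset R (cdim qs)) : is_subspace Q ->
  is_subspace (fun v => exists psi, Q psi /\ v = @tens0 R n t qs psi).
Proof.
move=> [Q0 [QD QZ]]; split; first by exists 0; rewrite tens00.
split.
  by move=> _ _ [a [Ha ->]] [b [Hb ->]]; exists (a + b); rewrite tens0D; split => //; apply: QD.
by move=> c _ [a [Ha ->]]; exists (c *: a); rewrite tens0Z; split => //; apply: QZ.
Qed.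

Lemma preim_tens0 (Y : vset R (qdim n)) : is_subspace Y ->
  is_subspace (fun psi => Y (@tens0 R n t qs psi)).
Proof.
move=> [Y0 [YD YZ]]; split; first by rewrite tens00.
split; first by move=> u v Hu1 Hv; rewrite tens0D; apply: YD.
by move=> a u Hu1; rewrite tens0Z; apply: YZ.
Qed.

Lemma psd1 : psd (1%:M : 'M[C]_1).
Proof. by move=> v; rewrite mulmx1; exact: normsq_ge0. Qed.

Lemma ca_init : complete_abstraction (sem (Init R qs)) (abs_init qs).
Proof.
move=> Rs HR.
pose E := fun i : 'I_(qdim t) => ext qs (delta_mx (zero_idx t) i : 'M[C]_(qdim t)).
rewrite (@kraus_ca n _ _ E) //; last first.
  move=> rho _; rewrite /= /sem_init; apply: eq_bigr => i _.
  by rewrite /E dag_ext dag_delta.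
set Q := alpha_s Rs; have HQ : is_subspace Q := alpha_subspace Rs.
have [Hd [Hi Hs]] := proj_exists HQ.
set P := projmx Q in Hd Hi Hs *.
have HP : P *m dag P = P by rewrite Hd.
pose G := fun u : 'cV[C]_(cdim qs) => exists a phi, Q phi /\ u = slice a phi.
have T : forall psi, supp (ptrace qs P) psi <-> Defs.span G psi.
  move=> psi; rewrite ptrace_kraus // (kraus_supp (fun k => fk P k) psd1).
  split; apply: span_mono.
    move=> _ [k [w [_ ->]]]; apply: span_gen; exists k.1, (col k.2 P *m w); split.
      by apply/Hs; exists (delta_mx k.2 0 *m w); rewrite colE mulmxA.
    apply/matrixP => c z; rewrite (ord1 z) /fk /slice !mxE big_ord1 !mxE.
    by rewrite big_ord1 mxE.
  move=> _ [a [phi [Hphi ->]]].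
  have [z ->] : supp P phi by apply/Hs.
  have -> : slice a (P *m z) = \sum_j fk P (a, j) *m row j z.
    apply/matrixP => c y; rewrite (ord1 y) summxE /slice !mxE.
    by apply: eq_bigr => j _; rewrite /fk /slice !mxE big_ord1 !mxE.
  apply: subspace_sum; first exact: span_subspace.
  move=> j; apply: span_gen; exists (a, j), (row j z); split => //.
  by exists (row j z); rewrite mul1mx.
apply: vset_ext => v; rewrite /abs_kraus /abs_init; split.
  move=> Hv.
  have := span_min (img_tens0 (span_subspace G)) _ Hv.
  case.
    move=> _ [i [psi [Hpsi ->]]]; exists (slice (st i) psi); split; last exact: init_kraus.
    by apply: span_gen; exists (st i), psi.
  by move=> psi [Hpsi ->]; exists psi; split => //; apply/T.
move=> [psi [Hpsi ->]]; move/T: Hpsi; move: psi.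
apply: (span_min (preim_tens0 (span_subspace _))).
move=> _ [a [phi [Hphi ->]]]; apply: span_gen; exists (idx a), phi; split => //.
by rewrite init_kraus /st /idx enum_rankK.
Qed.

End Join.
End Lin.

Theorem mainTheorem17 (R : realType) (n : nat) :
  (* skip *)
  complete_abstraction (sem (Skip R n)) (@abs_skip R n)
  (* initialisation qs := |0> *)
  /\ (forall (t : nat) (qs : t.-tuple 'I_n), uniq qs ->
        complete_abstraction (sem (Init R qs)) (abs_init qs))
  (* unitary qs *= U *)
  /\ (forall (t : nat) (qs : t.-tuple 'I_n) (U : 'M[R[i]]_(qdim t)),
        uniq qs -> unitary U ->
        complete_abstraction (sem (Unit qs U)) (abs_unit qs U))
  (* assert P[qs] *)
  /\ (forall (t : nat) (qs : t.-tuple 'I_n) (P : vset R (qdim t)),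
        uniq qs -> is_subspace P ->
        complete_abstraction (sem (Assert qs P)) (abs_assert qs P))
  (* arbitrary programs, via any Kraus representation of their semantics *)
  /\ (forall (S : prog R n) (K : finType) (E : K -> 'M[R[i]]_(qdim n)),
        wf S ->
        (forall rho, pdo rho -> sem S rho = \sum_(k : K) E k *m rho *m dag (E k)) ->
        complete_abstraction (sem S) (abs_kraus E)).
Proof.
split; first exact: ca_skip.
split; first by move=> t qs Hu; exact: ca_init.
split; first by move=> t qs U _ _; exact: ca_unit.
split; first by move=> t qs P _ HP; exact: ca_assert.
by move=> S K E _ HS; exact: kraus_ca.
Qed.
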